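(* Let $f$ and $\tau$ be as in the context. Suppose that for some $x\in\mathbb T^1$, $n\in\mathbb N$ and inverse branches $h_1,h_2\in\mathcal H^n$ with $x$ in both their domains, $$DF^n_{h_1(x)}\mathcal K_\eta\cap DF^n_{h_2(x)}\mathcal K_\eta=\{0\}.$$ Then there exists $C_0=C_0(n,x)>0$ such that $|(\tau_n\circ h_1)'(x)-(\tau_n\circ h_2)'(x)|>C_0$.
   Context: $\alpha\in(0,1)$, $\mathbb T^1=\mathbb R/\mathbb Z$. $f:\mathbb T^1\to\mathbb T^1$ is piecewise $C^{1+\alpha}$ on a countable partition into open intervals, with inverse branches $\mathcal H^n$ of $f^n$, partition $\{O_h\}_{h\in\mathcal H^n}$, $h:f^n(O_h)\to O_h$, $|(f^n)'|\ge e^{\lambda n}$ with $\lambda>\ln2$. $\tau:\mathbb T^1\to\mathbb R$ is piecewise $C^1$ with $|(\tau_n\circ h)'|\le C_\tau$ for all $n$, $h\in\mathcal H^n$, where $\tau_n=\sum_{j<n}\tau\circ f^j$. $F(x,y)=(f(x),y+\tau(x))$, $DF_{(x,y)}=\begin{pmatrix}f'(x)&0\\\tau'(x)&1\end{pmatrix}$ (independent of $y$), $DF^n_x=DF_{f^{n-1}x}\cdots DF_x$. $\eta=\|\tau'/f'\|_\infty/(1-\|1/f'\|_\infty)$, $\mathcal K_\eta=\{(u,v):|v|\le\eta|u|\}$. *)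

(* Defs.v *)
From Stdlib Require Import Reals ZArith.
From Coquelicot Require Import Coquelicot.
Open Scope R_scope.

(* The circle T^1 = R/Z is modelled through lifts: a point of T^1 is
   represented by any real; maps T^1 -> T^1 are represented by functions
   R -> R with f (y+1) - f y an integer; functions T^1 -> R are 1-periodic. *)

Definition is_int (r : R) : Prop := exists k : Z, r = IZR k.

Fixpoint fiter (f : R -> R) (n : nat) (y : R) : R :=
  match n with O => y | S m => f (fiter f m y) end.

Fixpoint birkhoff (f tau : R -> R) (n : nat) (y : R) : R :=
  match n with O => 0 | S m => birkhoff f tau m y + tau (fiter f m y) end.

(* Partition of T^1 into the open arcs (a i, b i) (mod 1), i : I.
   Their lifts to R are the intervals (a i + k, b i + k), k : Z. *)
Definition in_piece {I : Type} (a b : I -> R) (i : I) (k : Z) (y : R) : Prop :=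
  a i + IZR k < y < b i + IZR k.

Definition in_pieces {I : Type} (a b : I -> R) (y : R) : Prop :=
  exists i k, in_piece a b i k y.

Definition null_set (A : R -> Prop) : Prop :=
  forall eps, 0 < eps -> exists c d : nat -> R,
    (forall m, c m <= d m) /\
    (forall y, A y -> exists m, c m < y < d m) /\
    (forall N, sum_n (fun m => d m - c m) N <= eps).

(* y lies in the domain of smoothness of f^n: f^j y is in a partition
   element for every j < n *)
Definition good {I : Type} (a b : I -> R) (f : R -> R) (n : nat) (y : R) : Prop :=
  forall j, (j < n)%nat -> in_pieces a b (fiter f j y).

(* y lies in the connected component of {good n} containing y0, i.e. in the
   (lift of the) element O_h of the partition of f^n containing y0 *)
Definition same_comp {I : Type} (a b : I -> R) (f : R -> R) (n : nat) (y0 y : R) : Prop :=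
  forall t, Rmin y0 y <= t <= Rmax y0 y -> good a b f n t.

(* z (mod 1) lies in f^n(O_h), where O_h is the component of y0 *)
Definition branch_dom {I : Type} (a b : I -> R) (f : R -> R) (n : nat) (y0 z : R) : Prop :=
  exists y, same_comp a b f n y0 y /\ is_int (fiter f n y - z).

(* h is the inverse branch h : f^n(O_h) -> O_h of f^n, O_h the component of y0 *)
Definition inv_branch {I : Type} (a b : I -> R) (f : R -> R) (n : nat) (y0 : R)
  (h : R -> R) : Prop :=
  forall z, branch_dom a b f n y0 z ->
    same_comp a b f n y0 (h z) /\ is_int (fiter f n (h z) - z).

Definition DF (f tau : R -> R) (y : R) (w : R * R) : R * R :=
  (Derive f y * fst w, Derive tau y * fst w + snd w).

Fixpoint DFn (f tau : R -> R) (n : nat) (y : R) (w : R * R) : R * R :=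
  match n with O => w | S m => DFn f tau m (f y) (DF f tau y w) end.

(* sup norm over the points where the (piecewise) functions are defined *)
Definition supnorm {I : Type} (a b : I -> R) (g : R -> R) : R :=
  real (Lub_Rbar (fun r => exists y, in_pieces a b y /\ r = Rabs (g y))).

Definition eta {I : Type} (a b : I -> R) (f tau : R -> R) : R :=
  supnorm a b (fun y => Derive tau y / Derive f y)
  / (1 - supnorm a b (fun y => / Derive f y)).

Definition cone (e : R) (w : R * R) : Prop := Rabs (snd w) <= e * Rabs (fst w).

(* Main.v *)
Require Import Defs.
From Stdlib Require Import Reals ZArith Lra Lia Classical.
From Coquelicot Require Import Coquelicot.
Open Scope R_scope.

Lemma fiter_S f m y : fiter f (S m) y = fiter f m (f y).
Proof. induction m; simpl; auto. simpl in IHm. rewrite IHm. reflexivity. Qed.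

Lemma birk_S f tau m y : birkhoff f tau (S m) y = tau y + birkhoff f tau m (f y).
Proof.
  induction m.
  - simpl. ring.
  - change (birkhoff f tau (S (S m)) y) with (birkhoff f tau (S m) y + tau (fiter f (S m) y)).
    rewrite IHm, fiter_S. simpl. ring.
Qed.

Lemma good_S {I} (a b : I -> R) f m y :
  good a b f (S m) y <-> in_pieces a b y /\ good a b f m (f y).
Proof.
  split.
  - intros H. split. apply (H 0%nat). lia.
    intros j Hj. rewrite <- fiter_S. apply H. lia.
  - intros [H1 H2] j Hj. destruct j. exact H1. rewrite fiter_S. apply H2. lia.
Qed.

Lemma good_le {I} (a b : I -> R) f n m y : (m <= n)%nat -> good a b f n y -> good a b f m y.
Proof. intros Hle H j Hj. apply H. lia. Qed.

Fixpoint Pn (f : R -> R) (n : nat) (y : R) : R :=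
  match n with O => 1 | S m => Derive f y * Pn f m (f y) end.
Fixpoint Sn (f tau : R -> R) (n : nat) (y : R) : R :=
  match n with O => 0 | S m => Derive tau y + Derive f y * Sn f tau m (f y) end.

Lemma DFn_formula f tau n y u v :
  DFn f tau n y (u, v) = (Pn f n y * u, Sn f tau n y * u + v).
Proof.
  revert y u v; induction n; intros y u v; simpl.
  - f_equal; ring.
  - unfold DF; simpl. rewrite IHn. f_equal; ring.
Qed.

Lemma deriv_good {I} (a b : I -> R) f tau
  (Hfdiff : forall i k y, in_piece a b i k y -> ex_derive f y)
  (Htdiff : forall i k y, in_piece a b i k y -> ex_derive tau y /\ continuous (Derive tau) y) :
  forall n y, good a b f n y ->
  is_derive (fiter f n) y (Pn f n y) /\ is_derive (birkhoff f tau n) y (Sn f tau n y).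
Proof.
  induction n; intros y Hg.
  - simpl. split. apply is_derive_Reals, derivable_pt_lim_id. apply is_derive_Reals, derivable_pt_lim_const.
  - apply good_S in Hg. destruct Hg as [[i [k Hp]] Hg].
    destruct (IHn _ Hg) as [D1 D2].
    assert (Df : is_derive f y (Derive f y)) by (apply Derive_correct; eapply Hfdiff; eauto).
    assert (Dt : is_derive tau y (Derive tau y)) by (apply Derive_correct; eapply Htdiff; eauto).
    split.
    + apply is_derive_ext with (fun t => fiter f n (f t)).
      { intros t. rewrite fiter_S. reflexivity. }
      simpl. pose proof (is_derive_comp _ _ _ _ _ D1 Df) as H. exact H.
    + apply is_derive_ext with (fun t => tau t + birkhoff f tau n (f t)).
      { intros t. rewrite birk_S. reflexivity. }
      simpl. pose proof (is_derive_comp _ _ _ _ _ D2 Df) as H.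
      pose proof (is_derive_plus _ _ _ _ _ Dt H) as H2. exact H2.
Qed.

Lemma cont_eps g y : continuity_pt g y -> forall eps, 0 < eps ->
  exists d, 0 < d /\ forall z, Rabs (z - y) < d -> Rabs (g z - g y) < eps.
Proof.
  intros H eps He. destruct (H eps He) as [d [Hd Hz]].
  exists d; split; auto. intros z Hzy.
  destruct (Req_dec z y) as [->|Hne]. rewrite Rminus_eq_0, Rabs_R0; auto.
  apply (Hz z). split. split. constructor. auto. exact Hzy.
Qed.

Lemma is_derive_cont g y l : is_derive g y l -> continuity_pt g y.
Proof.
  intros H. apply is_derive_Reals in H.
  apply derivable_continuous_pt. exists l. exact H.
Qed.

Lemma good_open {I} (a b : I -> R) f
  (Hfdiff : forall i k y, in_piece a b i k y -> ex_derive f y) :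
  forall n y, good a b f n y -> exists d, 0 < d /\ forall z, Rabs (z - y) < d -> good a b f n z.
Proof.
  induction n; intros y Hg.
  - exists 1. split. lra. intros z _ j Hj. lia.
  - apply good_S in Hg. destruct Hg as [[i [k Hp]] Hg].
    destruct (IHn _ Hg) as [d2 [Hd2 H2]].
    assert (Hc : continuity_pt f y).
    { apply is_derive_cont with (Derive f y). apply Derive_correct. eapply Hfdiff; eauto. }
    destruct (cont_eps _ _ Hc d2 Hd2) as [d3 [Hd3 H3]].
    unfold in_piece in Hp.
    exists (Rmin d3 (Rmin (y - (a i + IZR k)) (b i + IZR k - y))).
    split. repeat apply Rmin_pos; lra.
    intros z Hz. apply good_S. split.
    + exists i, k. unfold in_piece.
      pose proof (Rmin_l d3 (Rmin (y - (a i + IZR k)) (b i + IZR k - y))).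
      pose proof (Rmin_r d3 (Rmin (y - (a i + IZR k)) (b i + IZR k - y))).
      pose proof (Rmin_l (y - (a i + IZR k)) (b i + IZR k - y)).
      pose proof (Rmin_r (y - (a i + IZR k)) (b i + IZR k - y)).
      apply Rabs_def2 in Hz. lra.
    + apply H2. apply H3.
      pose proof (Rmin_l d3 (Rmin (y - (a i + IZR k)) (b i + IZR k - y))). lra.
Qed.

Lemma good_cont {I} (a b : I -> R) f tau
  (Hfdiff : forall i k y, in_piece a b i k y -> ex_derive f y)
  (Htdiff : forall i k y, in_piece a b i k y -> ex_derive tau y /\ continuous (Derive tau) y) n y :
  good a b f n y -> continuity_pt (fiter f n) y.
Proof.
  intros H. apply is_derive_cont with (Pn f n y).
  apply (deriv_good a b f tau Hfdiff Htdiff n y H).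
Qed.

Lemma IVT2 g lo hi : lo < hi -> (forall z, lo <= z <= hi -> continuity_pt g z) ->
  g lo * g hi <= 0 -> exists z, lo <= z <= hi /\ g z = 0.
Proof.
  intros Hlt Hc Hs.
  destruct (Req_dec (g lo) 0) as [E|E]. exists lo. split. lra. auto.
  destruct (Req_dec (g hi) 0) as [E2|E2]. exists hi. split. lra. auto.
  destruct (Rlt_or_le (g lo) 0) as [L|L].
  - assert (0 < g hi) by nra.
    destruct (Ranalysis5.IVT_interv g lo hi Hc Hlt L H) as [z [Hz1 Hz2]]. exists z; auto.
  - assert (g hi < 0) by nra.
    assert (Hc' : forall z, lo <= z <= hi -> continuity_pt (fun t => - g t) z).
    { intros z Hz. apply continuity_pt_opp. auto. }
    destruct (Ranalysis5.IVT_interv (fun t => - g t) lo hi Hc' Hlt) as [z [Hz1 Hz2]].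
    lra. lra. exists z. split; auto. lra.
Qed.

Lemma same_piece {I} (a b : I -> R) f tau
  (Hdisj : forall i j k l y, in_piece a b i k y -> in_piece a b j l y -> i = j /\ k = l)
  (Hfdiff : forall i k y, in_piece a b i k y -> ex_derive f y)
  (Htdiff : forall i k y, in_piece a b i k y -> ex_derive tau y /\ continuous (Derive tau) y)
  n lo hi j i k : lo <= hi -> (forall t, lo <= t <= hi -> good a b f n t) -> (j < n)%nat ->
  in_piece a b i k (fiter f j lo) -> in_piece a b i k (fiter f j hi).
Proof.
  intros Hle Hg Hj Hlo.
  destruct (Req_dec lo hi) as [<-|Hne]; auto.
  assert (Hlt : lo < hi) by lra.
  assert (Hc : forall t, lo <= t <= hi -> continuity_pt (fiter f j) t).
  { intros t Ht. apply (good_cont a b f tau Hfdiff Htdiff). apply good_le with n. lia. auto. }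
  unfold in_piece in *.
  destruct (Rlt_or_le (fiter f j hi) (b i + IZR k)) as [L1|L1];
  [destruct (Rlt_or_le (a i + IZR k) (fiter f j hi)) as [L2|L2]; [lra|] |].
  - destruct (IVT2 (fun t => fiter f j t - (a i + IZR k)) lo hi Hlt) as [t [Ht Ht2]].
    { intros z Hz. apply continuity_pt_minus. auto. apply continuity_pt_const. intros u v; auto. }
    { assert (0 < fiter f j lo - (a i + IZR k)) by lra; assert (fiter f j hi - (a i + IZR k) <= 0) by lra; nra. }
    destruct (Hg t Ht j Hj) as [i' [k' Hp]]. unfold in_piece in Hp.
    set (s := (a i + IZR k + Rmin (b i + IZR k) (b i' + IZR k')) / 2).
    assert (Hm : a i + IZR k < Rmin (b i + IZR k) (b i' + IZR k')).
    { apply Rmin_glb_lt; lra. }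
    pose proof (Rmin_l (b i + IZR k) (b i' + IZR k')).
    pose proof (Rmin_r (b i + IZR k) (b i' + IZR k')).
    destruct (Hdisj i i' k k' s) as [E1 E2]; unfold in_piece, s; try lra.
    subst. lra.
  - destruct (IVT2 (fun t => fiter f j t - (b i + IZR k)) lo hi Hlt) as [t [Ht Ht2]].
    { intros z Hz. apply continuity_pt_minus. auto. apply continuity_pt_const. intros u v; auto. }
    { assert (fiter f j lo - (b i + IZR k) < 0) by lra; assert (0 <= fiter f j hi - (b i + IZR k)) by lra; nra. }
    destruct (Hg t Ht j Hj) as [i' [k' Hp]]. unfold in_piece in Hp.
    set (s := (Rmax (a i + IZR k) (a i' + IZR k') + (b i + IZR k)) / 2).
    assert (Hm : Rmax (a i + IZR k) (a i' + IZR k') < b i + IZR k).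
    { apply Rmax_lub_lt; lra. }
    pose proof (Rmax_l (a i + IZR k) (a i' + IZR k')).
    pose proof (Rmax_r (a i + IZR k) (a i' + IZR k')).
    destruct (Hdisj i i' k k' s) as [E1 E2]; unfold in_piece, s; try lra.
    subst. lra.
Qed.

Lemma inj_comp {I} (a b : I -> R) f tau
  (Hdisj : forall i j k l y, in_piece a b i k y -> in_piece a b j l y -> i = j /\ k = l)
  (Hfdiff : forall i k y, in_piece a b i k y -> ex_derive f y)
  (Htdiff : forall i k y, in_piece a b i k y -> ex_derive tau y /\ continuous (Derive tau) y)
  (Hfinj : forall i k y z, in_piece a b i k y -> in_piece a b i k z ->
      is_int (f y - f z) -> y = z)
  n lo hi : lo <= hi -> (forall t, lo <= t <= hi -> good a b f n t) ->
  forall m, (S m <= n)%nat -> is_int (fiter f (S m) lo - fiter f (S m) hi) -> lo = hi.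
Proof.
  intros Hle Hg.
  assert (SP : forall j, (j < n)%nat -> exists i k,
     in_piece a b i k (fiter f j lo) /\ in_piece a b i k (fiter f j hi)).
  { intros j Hj. destruct (Hg lo (conj (Rle_refl _) Hle) j Hj) as [i [k Hp]].
    exists i, k. split; auto. eapply same_piece; eauto. }
  induction m; intros Hm Hi.
  - destruct (SP 0%nat ltac:(lia)) as [i [k [P1 P2]]]. simpl in *.
    eapply Hfinj; eauto.
  - destruct (SP (S m) ltac:(lia)) as [i [k [P1 P2]]].
    apply IHm. lia. exists 0%Z.
    replace (fiter f (S m) lo) with (fiter f (S m) hi). simpl; ring.
    symmetry. eapply Hfinj; eauto.
Qed.

Lemma comp_union {I} (a b : I -> R) f n y1 p q :
  same_comp a b f n y1 p -> same_comp a b f n y1 q ->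
  forall t, Rmin p q <= t <= Rmax p q -> good a b f n t.
Proof.
  intros Hp Hq t Ht.
  destruct (classic (Rmin y1 p <= t <= Rmax y1 p)) as [H|H]. auto.
  apply Hq. unfold Rmin, Rmax in *. repeat destruct Rle_dec; lra.
Qed.

Lemma comp_ball {I} (a b : I -> R) f n y1 y0 d y :
  same_comp a b f n y1 y0 -> (forall z, Rabs (z - y0) < d -> good a b f n z) ->
  Rabs (y - y0) < d -> same_comp a b f n y1 y.
Proof.
  intros Hp Hb Hy t Ht.
  destruct (classic (Rmin y1 y0 <= t <= Rmax y1 y0)) as [H|H]. auto.
  apply Hb. apply Rabs_def2 in Hy. apply Rabs_def1; unfold Rmin, Rmax in *; repeat destruct Rle_dec; lra.
Qed.

Lemma sup_nonneg {I} (a b : I -> R) g : 0 <= supnorm a b g.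
Proof.
  unfold supnorm. set (E := fun r => _).
  destruct (Lub_Rbar_correct E) as [Hub Hlub].
  destruct (Lub_Rbar E) as [l| |] eqn:El; simpl; try lra.
  destruct (classic (exists y, in_pieces a b y)) as [[y Hy]|Hn].
  - assert (H := Hub (Rabs (g y)) (ex_intro _ y (conj Hy eq_refl))). simpl in H.
    pose proof (Rabs_pos (g y)). lra.
  - exfalso. assert (H : is_ub_Rbar E m_infty).
    { intros r [y [Hy _]]. exfalso. apply Hn. eauto. }
    specialize (Hlub _ H). simpl in Hlub. exact Hlub.
Qed.

Lemma sup_le {I} (a b : I -> R) g M : 0 <= M ->
  (forall y, in_pieces a b y -> Rabs (g y) <= M) -> supnorm a b g <= M.
Proof.
  intros HM Hb. unfold supnorm. set (E := fun r => _).
  destruct (Lub_Rbar_correct E) as [Hub Hlub].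
  assert (H : is_ub_Rbar E M).
  { intros r [y [Hy ->]]. simpl. auto. }
  specialize (Hlub _ H).
  destruct (Lub_Rbar E) as [l| |]; simpl in *; lra.
Qed.

Lemma eta_nonneg {I} (a b : I -> R) f tau lambda
  (Hlam : ln 2 < lambda)
  (Hexp : forall n y, good a b f n y -> Rabs (Derive (fiter f n) y) >= exp (lambda * INR n)) :
  0 <= eta a b f tau.
Proof.
  assert (Hl0 : 0 < lambda).
  { assert (0 < ln 2). { rewrite <- ln_1. apply ln_increasing; lra. } lra. }
  assert (He : 1 < exp lambda). { rewrite <- exp_0. apply exp_increasing. lra. }
  assert (Hs : supnorm a b (fun y => / Derive f y) <= / exp lambda).
  { apply sup_le. left. apply Rinv_0_lt_compat. lra.
    intros y Hy. assert (Hg : good a b f 1 y).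
    { apply good_S. split. auto. intros j Hj. lia. }
    pose proof (Hexp 1%nat y Hg) as H. simpl in H. rewrite Rmult_1_r in H.
    change (Derive (fiter f 1) y) with (Derive f y) in H.
    rewrite Rabs_inv. apply Rinv_le_contravar. lra. exact (Rge_le _ _ H). }
  assert (/ exp lambda < 1).
  { rewrite <- Rinv_1. apply Rinv_lt_contravar; lra. }
  unfold eta. unfold Rdiv. apply Rmult_le_pos. apply sup_nonneg.
  left. apply Rinv_0_lt_compat. lra.
Qed.

Lemma inv_close P q eps : P <> 0 -> 0 < eps ->
  Rabs (q - P) < Rmin (Rabs P / 2) (eps * (P * P) / 2) -> Rabs (/ q - / P) < eps.
Proof.
  intros HP He H.
  pose proof (Rmin_l (Rabs P / 2) (eps * (P * P) / 2)).
  pose proof (Rmin_r (Rabs P / 2) (eps * (P * P) / 2)).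
  assert (HAP : 0 < Rabs P) by (apply Rabs_pos_lt; auto).
  assert (Hq : Rabs P / 2 <= Rabs q).
  { pose proof (Rabs_triang_inv P (P - q)). replace (P - (P - q)) with q in H2 by ring.
    rewrite Rabs_minus_sym in H. lra. }
  assert (q <> 0). { intro E. rewrite E, Rabs_R0 in Hq. lra. }
  replace (/ q - / P) with ((P - q) * / (q * P)) by (field; auto).
  rewrite Rabs_mult, Rabs_inv, Rabs_mult, Rabs_minus_sym.
  assert (HPP : P * P = Rabs P * Rabs P).
  { rewrite <- Rabs_mult. rewrite Rabs_right. auto. apply Rle_ge, Rle_0_sqr. }
  assert (0 < Rabs q * Rabs P) by nra.
  apply (Rmult_lt_reg_r (Rabs q * Rabs P)); auto.
  rewrite Rmult_assoc, Rinv_l by lra. rewrite Rmult_1_r.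
  rewrite HPP in *.
  assert (0 <= (Rabs q - Rabs P / 2) * Rabs P) by (apply Rmult_le_pos; lra).
  assert (0 <= eps * ((Rabs q - Rabs P / 2) * Rabs P)) by (apply Rmult_le_pos; lra).
  lra.
Qed.

Lemma key {I} (a b : I -> R) f tau lambda
  (Hdisj : forall i j k l y, in_piece a b i k y -> in_piece a b j l y -> i = j /\ k = l)
  (Hfdiff : forall i k y, in_piece a b i k y -> ex_derive f y)
  (Htdiff : forall i k y, in_piece a b i k y -> ex_derive tau y /\ continuous (Derive tau) y)
  (Hfinj : forall i k y z, in_piece a b i k y -> in_piece a b i k z ->
      is_int (f y - f z) -> y = z)
  (Hexp : forall n y, good a b f n y -> Rabs (Derive (fiter f n) y) >= exp (lambda * INR n))
  m y1 h x
  (Hh : inv_branch a b f (S m) y1 h) (Hx : branch_dom a b f (S m) y1 x) :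
  Pn f (S m) (h x) <> 0 /\
  Derive (fun t => birkhoff f tau (S m) (h t)) x = Sn f tau (S m) (h x) / Pn f (S m) (h x).
Proof.
  set (n := S m). set (phi := fiter f n).
  destruct (Hh x Hx) as [Hc0 [c Hcint]].
  set (y0 := h x) in *.
  assert (Hg0 : good a b f n y0).
  { apply Hc0. unfold Rmin, Rmax; destruct Rle_dec; lra. }
  destruct (deriv_good a b f tau Hfdiff Htdiff n y0 Hg0) as [DP DS].
  set (P := Pn f n y0) in *.
  assert (HP : P <> 0).
  { intro E. pose proof (Hexp n y0 Hg0) as H. rewrite (is_derive_unique _ _ _ DP) in H.
    rewrite E, Rabs_R0 in H. pose proof (exp_pos (lambda * INR n)). lra. }
  assert (Dh : is_derive h x (/ P)).
  { apply is_derive_Reals. intros eps Heps.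
    destruct (good_open a b f Hfdiff n y0 Hg0) as [d0 [Hd0 Hball]].
    apply is_derive_Reals in DP.
    assert (HAP : 0 < Rabs P) by (apply Rabs_pos_lt; auto).
    assert (HPP : 0 < P * P) by (apply Rsqr_pos_lt; auto).
    set (gam := Rmin (Rabs P / 2) (eps * (P * P) / 2)).
    assert (Hgam : 0 < gam) by (apply Rmin_pos; nra).
    destruct (DP gam Hgam) as [dphi Hphi].
    pose proof (cond_pos dphi) as Hdphi.
    set (et := Rmin d0 dphi / 2).
    assert (Het : 0 < et) by (unfold et; pose proof (Rmin_pos d0 dphi Hd0 Hdphi); lra).
    assert (Het1 : et < d0) by (unfold et; pose proof (Rmin_l d0 dphi); lra).
    assert (Het2 : et < dphi) by (unfold et; pose proof (Rmin_r d0 dphi); lra).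
    assert (Hdel : 0 < Rabs P * et / 2) by nra.
    exists (mkposreal _ Hdel). intros d Hdn Hd. simpl in Hd.
    assert (Hgl : gam <= Rabs P / 2) by apply Rmin_l.
    assert (Hqp := Hphi et ltac:(lra) ltac:(rewrite Rabs_right; lra)).
    assert (Hqm := Hphi (- et) ltac:(lra) ltac:(rewrite Rabs_left; lra)).
    set (qp := (fiter f n (y0 + et) - fiter f n y0) / et) in Hqp.
    set (qm := (fiter f n (y0 + - et) - fiter f n y0) / - et) in Hqm.
    assert (Eqp : fiter f n (y0 + et) - fiter f n y0 = qp * et) by (unfold qp; field; lra).
    assert (Eqm : fiter f n (y0 + - et) - fiter f n y0 = - (qm * et)) by (unfold qm; field; lra).
    assert (Hcont : forall z, y0 - et <= z <= y0 + et ->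
      continuity_pt (fun t => fiter f n t - (fiter f n y0 + d)) z).
    { intros z Hz. apply continuity_pt_minus. apply (good_cont a b f tau Hfdiff Htdiff).
      apply Hball. apply Rabs_def1; lra. apply continuity_pt_const. intros u v; auto. }
    destruct (IVT2 _ (y0 - et) (y0 + et) ltac:(lra) Hcont) as [y [Hy Hyv]].
    { replace (y0 - et) with (y0 + - et) by ring.
      apply Rabs_def2 in Hqp. apply Rabs_def2 in Hqm. apply Rabs_def2 in Hd.
      destruct (Rlt_or_le 0 P) as [Pp|Pn0].
      - rewrite Rabs_right in Hgl, Hd by lra.
        assert (qp * et - d > 0) by nra. assert (- (qm * et) - d < 0) by nra. nra.
      - rewrite Rabs_left in Hgl, Hd by lra.
        assert (qp * et - d < 0) by nra. assert (- (qm * et) - d > 0) by nra. nra. }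
    cbv beta in Hyv.
    assert (Hyb : Rabs (y - y0) < d0) by (apply Rabs_def1; lra).
    assert (Hcy : same_comp a b f n y1 y) by (eapply comp_ball; eauto).
    assert (Hbd : branch_dom a b f n y1 (x + d)).
    { exists y. split; auto. exists c. rewrite <- Hcint. unfold y0, n in *. lra. }
    destruct (Hh _ Hbd) as [Hc1 [c1 Hc1int]].
    assert (Ehy : h (x + d) = y).
    { assert (HU := comp_union a b f n y1 _ _ Hc1 Hcy).
      assert (Hint : is_int (fiter f n (h (x + d)) - fiter f n y)).
      { exists (c1 - c)%Z. rewrite minus_IZR. unfold y0, n in *. lra. }
      destruct (Rle_dec (h (x + d)) y) as [L|L].
      - apply (inj_comp a b f tau Hdisj Hfdiff Htdiff Hfinj n (h (x + d)) y L) with m.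
        intros t Ht; apply HU; unfold Rmin, Rmax; destruct Rle_dec; lra.
        apply le_n. exact Hint.
      - symmetry. apply (inj_comp a b f tau Hdisj Hfdiff Htdiff Hfinj n y (h (x + d))) with m.
        lra. intros t Ht; apply HU; unfold Rmin, Rmax; destruct Rle_dec; lra.
        apply le_n. destruct Hint as [k Hk]. exists (- k)%Z. rewrite opp_IZR. unfold n in *. lra. }
    rewrite Ehy.
    set (D := y - y0).
    assert (HD : D <> 0). { intro E. unfold D in E. assert (y = y0) by lra. rewrite H in Hyv. apply Hdn. lra. }
    assert (HqD := Hphi D HD ltac:(apply Rabs_def2 in Hyb; apply Rabs_def1; unfold D; lra)).
    replace (y0 + D) with y in HqD by (unfold D; ring).
    replace (fiter f n y - fiter f n y0) with d in HqD by lra.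
    replace ((y - h x) / d) with (/ (d / D)).
    apply inv_close; auto.
    unfold D, y0 in *. field. split; auto. }
  split; auto.
  apply is_derive_unique.
  pose proof (is_derive_comp _ _ _ _ _ DS Dh) as H.
  replace (Sn f tau n y0 / P) with (scal (/ P) (Sn f tau n y0)). exact H.
  unfold scal; simpl; unfold mult; simpl. unfold Rdiv. ring.
Qed.
Theorem mainTheorem8 (alpha lambda C_tau : R) (I : Type) (a b : I -> R)
  (f tau : R -> R)
  (Halpha : 0 < alpha < 1)
  (* countable partition of T^1 into open arcs, of full measure *)
  (Hcount : exists enc : I -> nat, forall i j, enc i = enc j -> i = j)
  (Harc : forall i, a i < b i <= a i + 1)
  (Hdisj : forall i j k l y, in_piece a b i k y -> in_piece a b j l y -> i = j /\ k = l)
  (Hfull : null_set (fun y => ~ in_pieces a b y))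
  (* f : T^1 -> T^1, piecewise C^{1+alpha}, injective on each piece *)
  (Hfper : forall y, is_int (f (y + 1) - f y))
  (Hfdiff : forall i k y, in_piece a b i k y -> ex_derive f y)
  (Hfhold : forall i k, exists C, 0 <= C /\ forall y z,
      in_piece a b i k y -> in_piece a b i k z ->
      Rabs (Derive f y - Derive f z) <= C * Rpower (Rabs (y - z)) alpha)
  (Hfinj : forall i k y z, in_piece a b i k y -> in_piece a b i k z ->
      is_int (f y - f z) -> y = z)
  (* uniform expansion *)
  (Hlam : ln 2 < lambda)
  (Hexp : forall n y, good a b f n y -> Rabs (Derive (fiter f n) y) >= exp (lambda * INR n))
  (* tau : T^1 -> R, piecewise C^1 *)
  (Htper : forall y, tau (y + 1) = tau y)
  (Htdiff : forall i k y, in_piece a b i k y -> ex_derive tau y /\ continuous (Derive tau) y)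
  (Htau : forall n y0 h z, inv_branch a b f n y0 h -> branch_dom a b f n y0 z ->
      Rabs (Derive (fun t => birkhoff f tau n (h t)) z) <= C_tau)
  (* the data of the statement *)
  (x : R) (n : nat) (y1 y2 : R) (h1 h2 : R -> R)
  (Hh1 : inv_branch a b f n y1 h1) (Hh2 : inv_branch a b f n y2 h2)
  (Hx1 : branch_dom a b f n y1 x) (Hx2 : branch_dom a b f n y2 x)
  (Hcone : forall w,
      (exists u, cone (eta a b f tau) u /\ DFn f tau n (h1 x) u = w) ->
      (exists u, cone (eta a b f tau) u /\ DFn f tau n (h2 x) u = w) ->
      w = (0, 0)) :
  exists C0, 0 < C0 /\
    Rabs (Derive (fun t => birkhoff f tau n (h1 t)) x
          - Derive (fun t => birkhoff f tau n (h2 t)) x) > C0.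
Proof.
  assert (He : 0 <= eta a b f tau) by (eapply eta_nonneg; eauto).
  destruct n as [|m].
  - exfalso.
    assert (C : cone (eta a b f tau) (1, 0)).
    { unfold cone, fst, snd. rewrite Rabs_R0, Rabs_R1. lra. }
    assert (H : (1, 0) = (0, 0)).
    { apply Hcone; exists (1, 0); split; auto. }
    injection H. lra.
  - destruct (key a b f tau lambda Hdisj Hfdiff Htdiff Hfinj Hexp m y1 h1 x Hh1 Hx1) as [HP1 E1].
    destruct (key a b f tau lambda Hdisj Hfdiff Htdiff Hfinj Hexp m y2 h2 x Hh2 Hx2) as [HP2 E2].
    rewrite E1, E2.
    set (d1 := Sn f tau (S m) (h1 x) / Pn f (S m) (h1 x)).
    set (d2 := Sn f tau (S m) (h2 x) / Pn f (S m) (h2 x)).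
    assert (Hne : d1 <> d2).
    { intro E.
      assert (C1 : cone (eta a b f tau) (/ Pn f (S m) (h1 x), 0)).
      { unfold cone, fst, snd. rewrite Rabs_R0. apply Rmult_le_pos; auto. apply Rabs_pos. }
      assert (C2 : cone (eta a b f tau) (/ Pn f (S m) (h2 x), 0)).
      { unfold cone, fst, snd. rewrite Rabs_R0. apply Rmult_le_pos; auto. apply Rabs_pos. }
      assert (H : (1, d1) = (0, 0)).
      { apply Hcone.
        - exists (/ Pn f (S m) (h1 x), 0). split; auto.
          rewrite DFn_formula; unfold d1; f_equal; field; auto.
        - exists (/ Pn f (S m) (h2 x), 0). split; auto.
          rewrite DFn_formula; rewrite E; unfold d2; f_equal; field; auto. }
      injection H. lra. }
    exists (Rabs (d1 - d2) / 2).
    assert (0 < Rabs (d1 - d2)) by (apply Rabs_pos_lt; intro; apply Hne; lra).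
    split; lra.
Qed.
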